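(* Let $R$ be a nonzero commutative ring and $n\ge2$. Then $R$ has no zero divisors if and only if for all sets $\mathscr{R},\mathscr{S}$ of $R$-weighted complete graphs on $n$ vertices, $\mathscr R*\mathscr S=\{0\}$ implies $\mathscr R=\{0\}$ or $\mathscr S=\{0\}$, where $0$ denotes the graph with all weights $0$ (on the relevant vertex set).
   Context: An $R$-weighted complete graph $K$ is a finite vertex set with a weight $v_K(e)\in R$ on every 2-subset $e$. For such $H,G$ with equal vertex counts and a bijection $f:V(H)\to V(G)$, $H*_fG$ has vertex set $V(H)$ and weights $v_H(\{x,y\})\cdot v_G(\{f(x),f(y)\})$; $H*G=\{H*_fG: f \text{ bijection}\}$, and for sets $\mathscr H*\mathscr G=\bigcup_{H\in\mathscr H,G\in\mathscr G}H*G$. *)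

(* Defs.v *)
From mathcomp Require Import all_boot all_order all_algebra.
From mathcomp Require Import fingroup perm.
Set Implicit Arguments. Unset Strict Implicit. Unset Printing Implicit Defensive.
Import GRing.Theory.
Local Open Scope ring_scope.

(* An R-weighted complete graph on the vertex set 'I_n: a weight on every
   2-subset of 'I_n.  Represented by a finite function on {set 'I_n} that
   vanishes on sets of cardinality different from 2 (so that equality of
   graphs is equality of the weights on 2-subsets). *)
Record wgraph (R : comNzRingType) (n : nat) := WGraph {
  wfun :> {ffun {set 'I_n} -> R};
  wfunP : [forall e : {set 'I_n}, (#|e| != 2)%N ==> (wfun e == 0)] }.

Lemma zero_wgraph_subproof (R : comNzRingType) (n : nat) :
  [forall e : {set 'I_n}, (#|e| != 2)%N ==> ([ffun _ => 0 : R] e == 0)].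
Proof. by apply/forallP => e; rewrite ffunE eqxx implybT. Qed.

Definition zero_wgraph (R : comNzRingType) (n : nat) : wgraph R n :=
  WGraph (@zero_wgraph_subproof R n).

Definition wprod_fun (R : comNzRingType) (n : nat) (H G : wgraph R n)
  (f : {perm 'I_n}) : {ffun {set 'I_n} -> R} :=
  [ffun e : {set 'I_n} => if #|e| == 2%N then H e * G [set f x | x in e] else 0].

Lemma wprod_subproof (R : comNzRingType) (n : nat) (H G : wgraph R n)
  (f : {perm 'I_n}) :
  [forall e : {set 'I_n}, (#|e| != 2)%N ==> (wprod_fun H G f e == 0)].
Proof. apply/forallP => e; rewrite ffunE; case: (#|e| =P 2%N) => //= _; exact: eqxx. Qed.

Definition wprod (R : comNzRingType) (n : nat) (H G : wgraph R n)
  (f : {perm 'I_n}) : wgraph R n := WGraph (wprod_subproof H G f).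

Definition gset (R : comNzRingType) (n : nat) := wgraph R n -> Prop.

Definition gset_prod (R : comNzRingType) (n : nat) (Hs Gs : gset R n) : gset R n :=
  fun K => exists H G f, Hs H /\ Gs G /\ K = wprod H G f.

Definition is_zero_set (R : comNzRingType) (n : nat) (Hs : gset R n) : Prop :=
  forall K, Hs K <-> K = zero_wgraph R n.

Definition no_zero_divisors (R : comNzRingType) : Prop :=
  forall a b : R, a * b = 0 -> a = 0 \/ b = 0.

(* Main.v *)
Require Import Defs.
From mathcomp Require Import all_boot all_order all_algebra.
From mathcomp Require Import fingroup perm.
From Stdlib Require Import Classical.
Set Implicit Arguments. Unset Strict Implicit.
Import GRing.Theory.
Local Open Scope ring_scope.

Lemma wgraph_eq (R : comNzRingType) (n : nat) (H G : wgraph R n) :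
  wfun H = wfun G -> H = G.
Proof.
case: H => h hP; case: G => g gP /= E; subst g.
by rewrite (bool_irrelevance hP gP).
Qed.

Lemma wgraph_nz (R : comNzRingType) (n : nat) (H : wgraph R n) :
  H <> zero_wgraph R n -> exists x y : 'I_n, x != y /\ H [set x; y] != 0.
Proof.
move=> Hnz.
have [/forallP Hall|] := boolP [forall e, H e == 0].
  exfalso; apply: Hnz; apply: wgraph_eq; apply/ffunP => e.
  by rewrite ffunE; apply/eqP.
rewrite negb_forall => /existsP [e He].
have := forallP (wfunP H) e.
case: (boolP (#|e| == 2)) => [/cards2P [x [y [xy E]]] _|] /=.
  by exists x, y; rewrite -E; split.
by move=> _ E; rewrite E in He.
Qed.

Lemma perm_pair (n : nat) (x y x' y' : 'I_n) :
  x != y -> x' != y' -> exists f : {perm 'I_n}, f x = x' /\ f y = y'.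
Proof.
move=> xy xy'.
set g1 := tperm x x'.
set y1 := g1 y.
exists (g1 * tperm y1 y')%g.
rewrite !permM tpermL; split.
  rewrite tpermD //; last by rewrite eq_sym.
  rewrite /y1 /g1 -{2}(tpermL x x').
  by rewrite (inj_eq (@perm_inj _ _)) eq_sym.
by rewrite tpermL.
Qed.

Lemma const_subproof (R : comNzRingType) (n : nat) (a : R) :
  [forall e : {set 'I_n}, (#|e| != 2)%N ==>
     ([ffun e : {set 'I_n} => if #|e| == 2%N then a else 0] e == 0)].
Proof. by apply/forallP => e; rewrite ffunE; case: ifP => //= _; rewrite eqxx. Qed.

Definition constg (R : comNzRingType) (n : nat) (a : R) : wgraph R n :=
  WGraph (const_subproof n a).

Theorem mainTheorem14 (R : comNzRingType) (n : nat) (hn : (2 <= n)%N) :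
  no_zero_divisors R <->
  (forall Rs Ss : gset R n,
     is_zero_set (gset_prod Rs Ss) -> is_zero_set Rs \/ is_zero_set Ss).
Proof.
split.
- move=> nzd Rs Ss HP.
  have [H0 [G0 [f0 [RH0 [SG0 _]]]]] := proj2 (HP (zero_wgraph R n)) erefl.
  case: (classic (forall H, Rs H -> H = zero_wgraph R n)) => [AR|NR].
    left => K; split; first exact: AR.
    by move=> ->; rewrite -(AR _ RH0).
  case: (classic (forall G, Ss G -> G = zero_wgraph R n)) => [AS|NS].
    right => K; split; first exact: AS.
    by move=> ->; rewrite -(AS _ SG0).
  exfalso.
  have [H [RH HN]] : exists H, Rs H /\ H <> zero_wgraph R n.
    by apply: NNPP => C; apply: NR => H RH; apply: NNPP => HN; apply: C; exists H.
  have [G [SG GN]] : exists G, Ss G /\ G <> zero_wgraph R n.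
    by apply: NNPP => C; apply: NS => G SG; apply: NNPP => GN; apply: C; exists G.
  have [x [y [xy Hxy]]] := wgraph_nz HN.
  have [x' [y' [xy' Gxy]]] := wgraph_nz GN.
  have [f [fx fy]] := perm_pair xy xy'.
  have Z := proj1 (HP (wprod H G f)) (ex_intro _ H (ex_intro _ G (ex_intro _ f (conj RH (conj SG erefl))))).
  have := congr1 (fun K : wgraph R n => wfun K [set x; y]) Z.
  rewrite /= !ffunE cards2 xy /= imsetU1 imset_set1 fx fy.
  by case/nzd => /eqP; rewrite ?(negbTE Hxy) ?(negbTE Gxy).
- move=> Hyp a b ab.
  case: (eqVneq a 0) => [->|a0]; first by left.
  case: (eqVneq b 0) => [->|b0]; first by right.
  exfalso.
  have ne : forall c : R, c != 0 -> constg n c <> zero_wgraph R n.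
    move=> c c0 E.
    have := congr1 (fun K : wgraph R n => wfun K [set (Ordinal (ltnW hn)); Ordinal hn]) E.
    rewrite /= !ffunE cards2 /= => E0.
    by rewrite E0 eqxx in c0.
  have P : is_zero_set (gset_prod (fun K => K = constg n a) (fun K => K = constg n b)).
    move=> K; split.
      move=> [H [G [f [-> [-> ->]]]]]; apply: wgraph_eq; apply/ffunP => e.
      rewrite !ffunE; case: (#|e| == 2%N) => //.
      by rewrite card_imset ?fun_if; [case: (#|e| == 2%N); rewrite ?ab ?mulr0|exact: perm_inj].
    move=> ->; exists (constg n a), (constg n b), 1%g; split => //; split => //.
    apply: wgraph_eq; apply/ffunP => e; rewrite !ffunE.
    case: (#|e| == 2%N) => //.
    by rewrite card_imset; [rewrite ?ab ?mulr0; case: (#|e| == 2%N); rewrite ?ab ?mulr0|exact: perm_inj].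
  case: (Hyp _ _ P) => Z.
    by apply: (ne a a0); apply/Z.
  by apply: (ne b b0); apply/Z.
Qed.
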